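(* Let $R$ be a regular run. If Dir is set to close at some moment $\alpha$, then Dir = close over the interval $(\alpha,\alpha+d_{close})$.
   Context: Setting (evolving algebra for the railroad crossing). States are structures over a vocabulary containing: a finite universe Tracks; the reals and ExtendedReals $=\mathbb{R}\cup\{\infty\}$ with standard $<$ and $+$ ($\infty$ largest); a nullary real-valued symbol $\mathrm{CT}$ (current time); positive real constants $d_{close},d_{open},d_{min},d_{max}$ with $d_{close}<d_{min}\le d_{max}$; a unary function TrackStatus from Tracks to $\{\text{empty},\text{coming},\text{incrossing}\}$; a unary function Deadline from Tracks to ExtendedReals; a nullary Dir with values in $\{\text{open},\text{close}\}$; a nullary GateStatus with values in $\{\text{opened},\text{closed}\}$. Put $W=d_{min}-d_{close}$ and $\Delta_{close}=d_{close}+(d_{max}-d_{min})=d_{max}-W$. For a track $x$, $s(x)$ is the condition [$\mathrm{TrackStatus}(x)=\text{empty}$ or $\mathrm{CT}+d_{open}<\mathrm{Deadline}(x)$], and SafeToOpen is $\forall x\in\mathrm{Tracks}\ s(x)$. The program has two modules (agents). Gate: simultaneously OpenGate ''if Dir=open then GateStatus:=opened'' and CloseGate ''if Dir=close then GateStatus:=closed''. Controller: simultaneously, for every track $x$, SetDeadline$(x)$ ''if TrackStatus$(x)$=coming and Deadline$(x)=\infty$ then Deadline$(x):=\mathrm{CT}+W$'', SignalClose$(x)$ ''if $\mathrm{CT}=$Deadline$(x)$ then Dir:=close'', ClearDeadline$(x)$ ''if TrackStatus$(x)$=empty and Deadline$(x)<\infty$ then Deadline$(x):=\infty$'', together with SignalOpen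 ''if Dir=close and SafeToOpen then Dir:=open''. Executing a module means computing all updates it generates in the current state and performing them simultaneously (nothing happens if the update set is inconsistent). A module is enabled at a state if its update set is consistent and contains an update that changes the state. TrackStatus is external (changed only by the environment); Deadline, Dir, GateStatus are internal (changed only by the modules); other symbols are static. Runs: for $t\mapsto R(t)$, $t\in[0,\infty)$, let $\rho(t)$ be the reduct of $R(t)$ without CT. $R$ is a pre-run if all $R(t)$ share a superuniverse, $\mathrm{CT}=t$ in $R(t)$, and for every $\tau>0$ there are $0=t_0<\dots<t_n=\tau$ with $\rho$ constant on each $(t_i,t_{i+1})$. For a term $e$ (free variables fixed), $e_t$ is its value in $R(t)$, $e_{t+}$ (resp. $e_{t-}$, $t>0$) its constant value on some $(t,t+\epsilon)$ (resp. $(t-\epsilon,t)$); likewise $\rho(t\pm)$. $e$ holds over an interval if it holds at each point; $e$ becomes (is set to) $a$ at $t$ if $e_{t-}\ne a=e_t$ or $e_t\neq a=e_{t+}$. A pre-run is a run if (i) whenever $\rho(t+)\neq\rho(t)$, $\rho(t+)$ is the CT-free reduct of the result of executing some modules at $R(t)$ (these agents fire at $t$), with external functions equal in $\rho(t)$ and $\rho(t+)$; (ii) whenever $t>0$ and $\rho(t)\ne\rho(t-)$, they differ only in external functions. An agent is immediate if it fires at every moment it is enabled; bounded if immediate or there is $b>0$ with no interval $(t,t+b)$ over which it is enabled but never fires. Initial states: TrackStatus$(x)$=empty and Deadline$(x)=\infty$ for every track $x$. A regular run is a run $R$ with $R(0)$ initial such that: (Train Motion) for each track $x$ there is a finite or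 infinite sequence $0=t_0<t_1<t_2<\cdots$ (the significant moments of $x$) with TrackStatus$(x)$=empty over each $[t_{3i},t_{3i+1})$, =coming over each $[t_{3i+1},t_{3i+2})$ where $d_{min}\le t_{3i+2}-t_{3i+1}\le d_{max}$, =incrossing over each $[t_{3i+2},t_{3i+3})$, and, if the sequence is finite with last element $t_k$, then $3\mid k$ and TrackStatus$(x)$=empty over $[t_k,\infty)$; (Controller Timing) Controller is immediate; (Gate Timing) Gate is bounded, there is no interval $(t,t+d_{close})$ over which Dir=close and GateStatus=opened both hold, and no interval $(t,t+d_{open})$ over which Dir=open and GateStatus=closed both hold. *)

(* Defs.v *)
From Stdlib Require Import Reals FinFun.
Open Scope R_scope.

Inductive tstatus := Empty | Coming | InCrossing.
Inductive dirv := DOpen | DClose.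
Inductive gatev := Opened | Closed.
Inductive agent := Gate | Controller.

Section RailroadCrossing.

Variable Tracks : Type.

(* CT-free part of a state.  ExtendedReals = option R, with None = infinity. *)
Record state := mkState {
  TrackStatus : Tracks -> tstatus;
  Deadline : Tracks -> option R;
  Dir : dirv;
  GateStatus : gatev }.

Variables dclose dopen dmin dmax : R.

Definition W : R := dmin - dclose.

Inductive loc := LDeadline (x : Tracks) | LDir | LGate.
Inductive val := VDeadline (e : option R) | VDir (d : dirv) | VGate (g : gatev).

Definition content (s : state) (l : loc) : val :=
  match l with
  | LDeadline x => VDeadline (Deadline s x)
  | LDir => VDir (Dir s)
  | LGate => VGate (GateStatus s)
  end.

Definition updset := loc -> val -> Prop.

Definition s_cond (t : R) (s : state) (x : Tracks) : Prop :=
  TrackStatus s x = Empty \/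
  match Deadline s x with None => True | Some d => t + dopen < d end.

Definition SafeToOpen (t : R) (s : state) : Prop := forall x, s_cond t s x.

Definition OpenGate (s : state) : updset := fun l v =>
  Dir s = DOpen /\ l = LGate /\ v = VGate Opened.
Definition CloseGate (s : state) : updset := fun l v =>
  Dir s = DClose /\ l = LGate /\ v = VGate Closed.
Definition GateU (s : state) : updset := fun l v =>
  OpenGate s l v \/ CloseGate s l v.

Definition SetDeadline (t : R) (s : state) (x : Tracks) : updset := fun l v =>
  TrackStatus s x = Coming /\ Deadline s x = None /\
  l = LDeadline x /\ v = VDeadline (Some (t + W)).
Definition SignalClose (t : R) (s : state) (x : Tracks) : updset := fun l v =>
  Deadline s x = Some t /\ l = LDir /\ v = VDir DClose.
Definition ClearDeadline (s : state) (x : Tracks) : updset := fun l v =>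
  TrackStatus s x = Empty /\ Deadline s x <> None /\
  l = LDeadline x /\ v = VDeadline None.
Definition SignalOpen (t : R) (s : state) : updset := fun l v =>
  Dir s = DClose /\ SafeToOpen t s /\ l = LDir /\ v = VDir DOpen.
Definition ControllerU (t : R) (s : state) : updset := fun l v =>
  (exists x, SetDeadline t s x l v \/ SignalClose t s x l v \/ ClearDeadline s x l v)
  \/ SignalOpen t s l v.

Definition updates (a : agent) (t : R) (s : state) : updset :=
  match a with Gate => GateU s | Controller => ControllerU t s end.

Definition consistent (U : updset) : Prop :=
  forall l v1 v2, U l v1 -> U l v2 -> v1 = v2.

Definition enabled_at (a : agent) (t : R) (s : state) : Prop :=
  consistent (updates a t s) /\
  exists l v, updates a t s l v /\ content s l <> v.

Definition performs (U : updset) (s s' : state) : Prop :=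
  TrackStatus s' = TrackStatus s /\
  forall l, (forall v, U l v -> content s' l = v) /\
            ((forall v, ~ U l v) -> content s' l = content s l).

Definition exec_modules (S : agent -> Prop) (t : R) (s s' : state) : Prop :=
  performs (fun l v => exists a, S a /\ consistent (updates a t s) /\ updates a t s l v) s s'.

(* rho t is the CT-free reduct of R(t); CT = t implicitly. *)

Definition pre_run (rho : R -> state) : Prop :=
  forall tau, 0 < tau ->
  exists (n : nat) (ts : nat -> R),
    ts 0%nat = 0 /\ ts n = tau /\
    (forall i, (i < n)%nat -> ts i < ts (S i)) /\
    (forall i, (i < n)%nat -> forall u v,
        ts i < u < ts (S i) -> ts i < v < ts (S i) -> rho u = rho v).

Definition right_val (rho : R -> state) (t : R) (s : state) : Prop :=
  exists eps, 0 < eps /\ forall u, t < u < t + eps -> rho u = s.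
Definition left_val (rho : R -> state) (t : R) (s : state) : Prop :=
  exists eps, 0 < eps /\ forall u, t - eps < u < t -> rho u = s.

(* F t is the set of agents executed at t *)
Definition is_run (rho : R -> state) (F : R -> agent -> Prop) : Prop :=
  pre_run rho /\
  (forall t s, 0 <= t -> right_val rho t s -> s <> rho t ->
     exec_modules (F t) t (rho t) s /\ TrackStatus s = TrackStatus (rho t)) /\
  (forall t s, 0 < t -> left_val rho t s -> s <> rho t ->
     Deadline s = Deadline (rho t) /\ Dir s = Dir (rho t) /\
     GateStatus s = GateStatus (rho t)).

Definition fires (rho : R -> state) (F : R -> agent -> Prop) (a : agent) (t : R) : Prop :=
  F t a /\ exists s, right_val rho t s /\ s <> rho t.

Definition immediate (rho : R -> state) (F : R -> agent -> Prop) (a : agent) : Prop :=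
  forall t, 0 <= t -> enabled_at a t (rho t) -> fires rho F a t.

Definition bounded (rho : R -> state) (F : R -> agent -> Prop) (a : agent) : Prop :=
  immediate rho F a \/
  exists b, 0 < b /\
    ~ (exists t, 0 <= t /\
         (forall u, t < u < t + b -> enabled_at a u (rho u)) /\
         (forall u, t < u < t + b -> ~ fires rho F a u)).

Definition initial (s : state) : Prop :=
  forall x, TrackStatus s x = Empty /\ Deadline s x = None.

(* significant moments ts 0, ts 1, ...; len = None: infinite sequence,
   len = Some k: finite sequence with last element ts k *)
Definition valid_index (len : option nat) (j : nat) : Prop :=
  match len with None => True | Some k => (j <= k)%nat end.

Definition train_motion (rho : R -> state) (x : Tracks) : Prop :=
  exists (ts : nat -> R) (len : option nat),
    ts 0%nat = 0 /\
    (forall j, valid_index len (S j) -> ts j < ts (S j)) /\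
    (forall i, valid_index len (3 * i + 1) ->
       forall u, ts (3 * i)%nat <= u < ts (3 * i + 1)%nat ->
         TrackStatus (rho u) x = Empty) /\
    (forall i, valid_index len (3 * i + 2) ->
       (forall u, ts (3 * i + 1)%nat <= u < ts (3 * i + 2)%nat ->
         TrackStatus (rho u) x = Coming) /\
       dmin <= ts (3 * i + 2)%nat - ts (3 * i + 1)%nat <= dmax) /\
    (forall i, valid_index len (3 * i + 3) ->
       forall u, ts (3 * i + 2)%nat <= u < ts (3 * i + 3)%nat ->
         TrackStatus (rho u) x = InCrossing) /\
    (forall k, len = Some k ->
       Nat.modulo k 3 = 0%nat /\
       forall u, ts k <= u -> TrackStatus (rho u) x = Empty).

Definition regular_run (rho : R -> state) (F : R -> agent -> Prop) : Prop :=
  is_run rho F /\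
  initial (rho 0) /\
  (forall x, train_motion rho x) /\
  immediate rho F Controller /\
  bounded rho F Gate /\
  ~ (exists t, 0 <= t /\ forall u, t < u < t + dclose ->
        Dir (rho u) = DClose /\ GateStatus (rho u) = Opened) /\
  ~ (exists t, 0 <= t /\ forall u, t < u < t + dopen ->
        Dir (rho u) = DOpen /\ GateStatus (rho u) = Closed).

Definition Dir_set_to (rho : R -> state) (d : dirv) (t : R) : Prop :=
  (0 < t /\ exists s, left_val rho t s /\ Dir s <> d /\ Dir (rho t) = d) \/
  (Dir (rho t) <> d /\ exists s, right_val rho t s /\ Dir s = d).

End RailroadCrossing.

(* Main.v *)
Require Import Defs.
From Stdlib Require Import Reals FinFun Lra Lia Classical ZArith.
Open Scope R_scope.

Lemma real_ind (P : R -> Prop) :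
  P 0 ->
  (forall t, 0 < t -> (forall w, 0 <= w < t -> P w) -> P t) ->
  (forall t, 0 <= t -> (forall w, 0 <= w <= t -> P w) ->
     exists eps, 0 < eps /\ forall w, t < w < t + eps -> P w) ->
  forall t, 0 <= t -> P t.
Proof.
  intros H0 HL HR t0 Ht0.
  apply NNPP; intro Hn.
  set (E := fun s => 0 <= s /\ forall w, 0 <= w <= s -> P w).
  assert (Hb : bound E).
  { exists t0. intros s [Hs Hs']. destruct (Rle_lt_dec s t0) as [h|h]; auto.
    exfalso; apply Hn, Hs'; lra. }
  assert (He : exists x, E x).
  { exists 0. split; [lra|]. intros w Hw. replace w with 0 by lra. auto. }
  destruct (completeness E Hb He) as [m [Hub Hlub]].
  assert (Hm0 : 0 <= m). { apply Hub. split; [lra|]. intros w Hw. replace w with 0 by lra. auto. }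
  assert (Hlt : forall w, 0 <= w < m -> P w).
  { intros w Hw. apply NNPP; intro Hnw.
    assert (m <= w). { apply Hlub. intros s [Hs Hs']. destruct (Rle_lt_dec s w) as [h|h]; auto.
      exfalso; apply Hnw, Hs'; lra. }
    lra. }
  assert (Hm : P m).
  { destruct (Rle_lt_or_eq_dec 0 m Hm0) as [h|h]. apply HL; auto. subst m. auto. }
  assert (Hle : forall w, 0 <= w <= m -> P w).
  { intros w Hw. destruct (Rle_lt_or_eq_dec w m (proj2 Hw)) as [h|h]. apply Hlt; lra. subst; auto. }
  destruct (HR m Hm0 Hle) as [eps [Heps Hr]].
  assert (E (m + eps/2)).
  { split; [lra|]. intros w Hw. destruct (Rle_lt_dec w m) as [h|h]. apply Hle; lra. apply Hr; lra. }
  specialize (Hub _ H). lra.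
Qed.

Lemma search1 (f : nat -> R) t n : f 0%nat <= t -> t < f n ->
  exists i, (i < n)%nat /\ f i <= t < f (S i).
Proof.
  induction n; intros H1 H2. lra.
  destruct (Rlt_le_dec t (f n)) as [h|h].
  destruct (IHn H1 h) as [i [Hi Hi']]. exists i; split; auto.
  exists n; split; auto.
Qed.

Lemma search2 (f : nat -> R) t n : f 0%nat < t -> t <= f n ->
  exists i, (i < n)%nat /\ f i < t <= f (S i).
Proof.
  induction n; intros H1 H2. lra.
  destruct (Rle_lt_dec t (f n)) as [h|h].
  destruct (IHn H1 h) as [i [Hi Hi']]. exists i; split; auto.
  exists n; split; auto.
Qed.

Lemma right_exists Tr (rho : R -> state Tr) : pre_run _ rho ->
  forall t, 0 <= t -> exists s, right_val _ rho t s.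
Proof.
  intros Hp t Ht. destruct (Hp (t+1)) as [n [ts [H0 [Hn [Hinc Hc]]]]]; [lra|].
  destruct (search1 ts t n) as [i [Hi [Hi1 Hi2]]]; [lra|lra|].
  exists (rho ((t + ts (S i))/2)). exists (ts (S i) - t). split; [lra|].
  intros u Hu. apply (Hc i Hi); lra.
Qed.

Lemma left_exists Tr (rho : R -> state Tr) : pre_run _ rho ->
  forall t, 0 < t -> exists s, left_val _ rho t s.
Proof.
  intros Hp t Ht. destruct (Hp t) as [n [ts [H0 [Hn [Hinc Hc]]]]]; [lra|].
  destruct (search2 ts t n) as [i [Hi [Hi1 Hi2]]]; [lra|lra|].
  exists (rho ((t + ts i)/2)). exists (t - ts i). split; [lra|].
  intros u Hu. apply (Hc i Hi); lra.
Qed.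

Lemma right_unique Tr (rho : R -> state Tr) t s1 s2 :
  right_val _ rho t s1 -> right_val _ rho t s2 -> s1 = s2.
Proof.
  intros [e1 [He1 H1]] [e2 [He2 H2]].
  rewrite <- (H1 (t + Rmin e1 e2 / 2)), <- (H2 (t + Rmin e1 e2 / 2)); auto;
  split; try lra; assert (Rmin e1 e2 <= e1) by apply Rmin_l;
  assert (Rmin e1 e2 <= e2) by apply Rmin_r; assert (0 < Rmin e1 e2) by (apply Rmin_glb_lt; auto); lra.
Qed.

Lemma exec_cases Tr dc dop dm S t (s s' : state Tr) l :
  exec_modules _ dc dop dm S t s s' ->
  content _ s' l = content _ s l \/
  exists a v, S a /\ updates _ dc dop dm a t s l v /\ content _ s' l = v.
Proof.
  intros [_ H]. destruct (H l) as [H1 H2].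
  destruct (classic (exists v a, S a /\ consistent _ (updates _ dc dop dm a t s) /\ updates _ dc dop dm a t s l v)) as [[v [a Hv]]|Hn].
  right. exists a, v. split; [tauto|]. split; [tauto|]. apply H1. exists a; tauto.
  left. apply H2. intros v Hv. apply Hn. exists v. exact Hv.
Qed.

Lemma exec_in Tr dc dop dm S t (s s' : state Tr) a l v :
  exec_modules _ dc dop dm S t s s' -> S a -> consistent _ (updates _ dc dop dm a t s) ->
  updates _ dc dop dm a t s l v -> content _ s' l = v.
Proof.
  intros [_ H] Ha Hc Hu. apply (proj1 (H l)). exists a; auto.
Qed.

Lemma valid_dec len j : valid_index len j \/ exists K, len = Some K /\ (K < j)%nat.
Proof.
  destruct len as [K|]; simpl; auto.
  destruct (Compare_dec.le_lt_dec j K); auto. right; exists K; auto.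
Qed.

Lemma valid_le len i j : (i <= j)%nat -> valid_index len j -> valid_index len i.
Proof. destruct len; simpl; auto; lia. Qed.

Lemma arch_nat t d : 0 < d -> exists i : nat, t < INR i * d.
Proof.
  intros Hd. destruct (archimed (Rabs t / d)) as [H1 _].
  assert (0 <= Rabs t / d) by (unfold Rdiv; apply Rmult_le_pos; [apply Rabs_pos|left; apply Rinv_0_lt_compat; lra]).
  assert (Hz : (0 < up (Rabs t / d))%Z) by (apply lt_IZR; lra).
  exists (Z.to_nat (up (Rabs t / d))).
  rewrite INR_IZR_INZ, Z2Nat.id by lia.
  assert (Rabs t / d * d = Rabs t) by (field; lra).
  assert (t <= Rabs t) by apply RRle_abs.
  assert (Rabs t / d * d < IZR (up (Rabs t / d)) * d) by (apply Rmult_lt_compat_r; lra).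
  lra.
Qed.

Lemma phase Tr dmin dmax (rho : R -> state Tr) x : 0 < dmin ->
  train_motion _ dmin dmax rho x -> forall t, 0 <= t ->
  TrackStatus _ (rho t) x = Coming ->
  exists c e, c <= t < e /\ c + dmin <= e /\
    forall w, c <= w < e -> TrackStatus _ (rho w) x = Coming.
Proof.
  intros Hdm (ts & len & H0 & Hinc & He & Hc & Hi & Hfin) t Ht Hcome.
  assert (Cov : exists k, valid_index len k /\ ts k <= t /\
                  (valid_index len (S k) -> t < ts (S k))).
  { destruct len as [K|].
    - destruct (Rle_lt_dec (ts K) t) as [h|h].
      + exists K. simpl. split; [lia|]. split; auto. lia.
      + destruct (search1 ts t K) as [i [Hik [Hi1 Hi2]]]; [lra|auto|].
        exists i. simpl. split; [lia|]. auto.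
    - assert (Hb : forall i, INR i * dmin <= ts (3 * i + 1)%nat).
      { induction i.
        - simpl. pose proof (Hinc 0%nat I). simpl in *. lra.
        - rewrite S_INR.
          pose proof (proj2 (Hc i I)).
          pose proof (Hinc (3*i+2)%nat I). pose proof (Hinc (3*i+3)%nat I).
          replace (S (3 * i + 2)) with (3*i+3)%nat in * by lia.
          replace (S (3 * i + 3)) with (3 * S i + 1)%nat in * by lia.
          lra. }
      destruct (arch_nat t dmin Hdm) as [i Hti].
      destruct (search1 ts t (3*i+1)) as [k [_ [Hk1 Hk2]]]; [lra| pose proof (Hb i); lra|].
      exists k. simpl. auto. }
  destruct Cov as [k [Hvk [Hk1 Hk2]]].
  pose proof (Nat.div_mod_eq k 3) as Hdm3.
  pose proof (Nat.mod_upper_bound k 3 ltac:(lia)) as Hr.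
  assert (exists q, k = 3*q \/ k = 3*q+1 \/ k = 3*q+2)%nat as [q [R0|[R1|R2]]]
    by (exists (k/3)%nat; lia).
  - exfalso. subst k.
    destruct (valid_dec len (3*q+1)) as [V|[K [HK HKl]]].
    + replace (S (3*q)) with (3*q+1)%nat in Hk2 by lia.
      rewrite (He q V t) in Hcome; [discriminate|]. split; auto.
    + assert (K = 3*q)%nat by (simpl in Hvk; rewrite HK in Hvk; simpl in Hvk; lia). subst K.
      rewrite (proj2 (Hfin _ HK) t Hk1) in Hcome. discriminate.
  - subst k.
    destruct (valid_dec len (3*q+2)) as [V|[K [HK HKl]]].
    + replace (S (3*q+1)) with (3*q+2)%nat in Hk2 by lia.
      destruct (Hc q V) as [Hcc Hd].
      exists (ts (3*q+1)%nat), (ts (3*q+2)%nat). split; [auto|]. split; [lra|]. auto.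
    + exfalso. rewrite HK in Hvk; simpl in Hvk. assert (K = 3*q+1)%nat by lia.
      pose proof (proj1 (Hfin _ HK)). pose proof (Nat.div_mod_eq K 3). lia.
  - exfalso. subst k.
    destruct (valid_dec len (3*q+3)) as [V|[K [HK HKl]]].
    + replace (S (3*q+2)) with (3*q+3)%nat in Hk2 by lia.
      rewrite (Hi q V t) in Hcome; [discriminate|]. split; auto.
    + rewrite HK in Hvk; simpl in Hvk. assert (K = 3*q+2)%nat by lia.
      pose proof (proj1 (Hfin _ HK)). pose proof (Nat.div_mod_eq K 3). lia.
Qed.

Lemma rs_deadline Tr dc dop dm (S : agent -> Prop) t (s s' : state Tr) y :
  exec_modules _ dc dop dm S t s s' ->
  Deadline _ s' y = Deadline _ s y \/
  (TrackStatus _ s y = Coming /\ Deadline _ s y = None /\ Deadline _ s' y = Some (t + W dc dm)) \/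
  (TrackStatus _ s y = Empty /\ Deadline _ s' y = None).
Proof.
  intros Hex. destruct (exec_cases _ _ _ _ _ _ _ _ (LDeadline _ y) Hex) as [H|[a [v [Ha [Hu Hc]]]]].
  - left. simpl in H. injection H; auto.
  - destruct a; simpl in Hu.
    + destruct Hu as [[_ [Hl _]]|[_ [Hl _]]]; discriminate.
    + destruct Hu as [[x [Hu|[Hu|Hu]]]|Hu].
      * destruct Hu as [Hs [Hd [Hl Hv]]]. injection Hl; intro; subst x v. simpl in Hc.
        injection Hc; intro. right; left; auto.
      * destruct Hu as [_ [Hl _]]; discriminate.
      * destruct Hu as [Hs [Hd [Hl Hv]]]. injection Hl; intro; subst x v. simpl in Hc.
        injection Hc; intro. right; right; auto.
      * destruct Hu as [_ [_ [Hl _]]]; discriminate.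
Qed.

Lemma rs_dir Tr dc dop dm (S : agent -> Prop) t (s s' : state Tr) :
  exec_modules _ dc dop dm S t s s' ->
  Dir _ s' = Dir _ s \/
  (exists y, Deadline _ s y = Some t /\ Dir _ s' = DClose) \/
  (Dir _ s = DClose /\ SafeToOpen _ dop t s /\ Dir _ s' = DOpen).
Proof.
  intros Hex. destruct (exec_cases _ _ _ _ _ _ _ _ (LDir _) Hex) as [H|[a [v [Ha [Hu Hc]]]]].
  - left. simpl in H. injection H; auto.
  - destruct a; simpl in Hu.
    + destruct Hu as [[_ [Hl _]]|[_ [Hl _]]]; discriminate.
    + destruct Hu as [[x [Hu|[Hu|Hu]]]|Hu].
      * destruct Hu as [_ [_ [Hl _]]]; discriminate.
      * destruct Hu as [Hd [Hl Hv]]. subst v. simpl in Hc.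
        injection Hc; intro. right; left; eauto.
      * destruct Hu as [_ [_ [Hl _]]]; discriminate.
      * destruct Hu as [Hd [Hsf [Hl Hv]]]. subst v. simpl in Hc.
        injection Hc; intro. right; right; auto.
Qed.

Lemma cons_ctrl Tr dc dop dm t (s : state Tr) :
  (forall y, Deadline _ s y = Some t -> TrackStatus _ s y <> Empty) -> 0 < dop ->
  consistent _ (updates _ dc dop dm Controller t s).
Proof.
  intros Hy Hdop l v1 v2 H1 H2. simpl in H1, H2.
  destruct H1 as [[x1 [A|[A|A]]]|A]; destruct H2 as [[x2 [B|[B|B]]]|B];
  unfold SetDeadline, SignalClose, ClearDeadline, SignalOpen in *;
  repeat match goal with H : _ /\ _ |- _ => destruct H end; subst; try congruence;
  match goal with Hd : Deadline _ s ?x = Some t, Hs : SafeToOpen _ _ _ _ |- _ =>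
    destruct (Hs x) as [E|E]; [exfalso; apply (Hy x Hd E) | rewrite Hd in E; lra] end.
Qed.

Definition I1 Tr dclose dmin (rho : R -> state Tr) t x : Prop :=
  forall d, Deadline _ (rho t) x = Some d -> d - W dclose dmin <= t /\
    forall w, d - W dclose dmin <= w < d + dclose -> TrackStatus _ (rho w) x = Coming.

Definition I2 Tr (rho : R -> state Tr) t x : Prop :=
  TrackStatus _ (rho t) x = Coming -> Deadline _ (rho t) x = None ->
  forall eta, 0 < eta -> exists w, t - eta < w < t /\ 0 <= w /\ TrackStatus _ (rho w) x <> Coming.

Theorem mainTheorem12 (Tracks : Type) (dclose dopen dmin dmax : R) :
  Finite Tracks ->
  0 < dclose -> 0 < dopen -> 0 < dmin -> 0 < dmax ->
  dclose < dmin -> dmin <= dmax ->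
  forall (rho : R -> state Tracks) (F : R -> agent -> Prop),
    @regular_run Tracks dclose dopen dmin dmax rho F ->
    forall alpha, 0 <= alpha ->
      @Dir_set_to Tracks rho DClose alpha ->
      forall u, alpha < u < alpha + dclose -> @Dir Tracks (rho u) = DClose.
Proof.
  intros HFin Hdc Hdo Hdm Hdx Hlt Hle rho F HR alpha Ha Hset u Hu.
  destruct HR as [[Hpre [Hrun1 Hrun2]] [Hinit [HTM [Himm _]]]].
  assert (HW : W dclose dmin = dmin - dclose) by reflexivity.
  assert (RS : forall t s, 0 <= t -> right_val _ rho t s ->
     TrackStatus _ s = TrackStatus _ (rho t) /\
     (s = rho t \/ exec_modules _ dclose dopen dmin (F t) t (rho t) s)).
  { intros t s Ht Hr. destruct (classic (s = rho t)) as [E|E].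
    subst; auto. destruct (Hrun1 t s Ht Hr E); auto. }
  assert (RSD : forall t s y, 0 <= t -> right_val _ rho t s ->
    Deadline _ s y = Deadline _ (rho t) y \/
    (TrackStatus _ (rho t) y = Coming /\ Deadline _ (rho t) y = None /\
       Deadline _ s y = Some (t + W dclose dmin)) \/
    (TrackStatus _ (rho t) y = Empty /\ Deadline _ s y = None)).
  { intros t s y Ht Hr. destruct (RS t s Ht Hr) as [_ [E|E]].
    subst; auto. eapply rs_deadline; eauto. }
  assert (RSDir : forall t s, 0 <= t -> right_val _ rho t s ->
    Dir _ s = Dir _ (rho t) \/
    (exists y, Deadline _ (rho t) y = Some t /\ Dir _ s = DClose) \/
    (Dir _ (rho t) = DClose /\ SafeToOpen _ dopen t (rho t) /\ Dir _ s = DOpen)).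
  { intros t s Ht Hr. destruct (RS t s Ht Hr) as [_ [E|E]].
    subst; auto. eapply rs_dir; eauto. }
  assert (LS : forall t s, 0 < t -> left_val _ rho t s ->
    Deadline _ s = Deadline _ (rho t) /\ Dir _ s = Dir _ (rho t)).
  { intros t s Ht Hl. destruct (classic (s = rho t)) as [E|E].
    subst; auto. destruct (Hrun2 t s Ht Hl E) as [A [B _]]; auto. }
  assert (Inv : forall t, 0 <= t -> forall x, I1 _ dclose dmin rho t x /\ I2 _ rho t x).
  { apply (real_ind (fun t => forall x, I1 _ dclose dmin rho t x /\ I2 _ rho t x)).
    - intros x. destruct (Hinit x) as [E D]. split.
      + intros d Hd; congruence.
      + intros Hc; congruence.
    - intros t Ht IH x.
      destruct (left_exists _ rho Hpre t Ht) as [s' Hl].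
      destruct (LS t s' Ht Hl) as [LD _]. destruct Hl as [eps [Heps Hs']].
      split.
      + intros d Hd. rewrite <- LD in Hd.
        set (w := Rmax (t - eps/2) (t/2)).
        assert (t - eps/2 <= w) by apply Rmax_l. assert (t/2 <= w) by apply Rmax_r.
        assert (w < t) by (apply Rmax_lub_lt; lra).
        destruct (proj1 (IH w ltac:(lra) x) d) as [A B].
        { rewrite (Hs' w); auto; lra. }
        split; auto; lra.
      + intros Hc Hd eta Heta. apply NNPP; intro Hno.
        assert (Hall : forall w, t - eta < w < t -> 0 <= w -> TrackStatus _ (rho w) x = Coming).
        { intros w Hw Hw0. apply NNPP; intro Hn. apply Hno. exists w; auto. }
        set (a := Rmax (t-eta) (Rmax (t-eps) 0)).
        assert (t - eta <= a) by apply Rmax_l.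
        assert (Rmax (t-eps) 0 <= a) by apply Rmax_r.
        assert (t - eps <= Rmax (t-eps) 0) by apply Rmax_l.
        assert (0 <= Rmax (t-eps) 0) by apply Rmax_r.
        assert (a < t) by (apply Rmax_lub_lt; [lra|apply Rmax_lub_lt; lra]).
        set (w := (a + t)/2).
        assert (Hrw : rho w = s') by (apply Hs'; unfold w; lra).
        assert (Hcw : TrackStatus _ (rho w) x = Coming) by (apply Hall; unfold w; lra).
        assert (Hdw : Deadline _ (rho w) x = None) by (rewrite Hrw, LD; auto).
        destruct (proj2 (IH w ltac:(unfold w; lra) x) Hcw Hdw (w - a) ltac:(unfold w; lra))
          as [w' [Hw' [Hw'0 Hnc]]].
        apply Hnc, Hall; auto; unfold w in *; lra.
    - intros t Ht IH.
      destruct (right_exists _ rho Hpre t Ht) as [s Hr].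
      pose proof Hr as Hr'. destruct Hr' as [eps [Heps Hs]].
      destruct (RS t s Ht Hr) as [TS _].
      assert (Key : forall y, TrackStatus _ (rho t) y = Coming -> Deadline _ (rho t) y = None ->
                forall w, t <= w < t + dmin -> TrackStatus _ (rho w) y = Coming).
      { intros y Hc Hd w Hw.
        destruct (phase _ dmin dmax rho y Hdm (HTM y) t Ht Hc) as [c [e [Hce [Hde Hph]]]].
        destruct (Rle_lt_or_eq_dec c t (proj1 Hce)) as [h|h].
        - exfalso. destruct (proj2 (IH t ltac:(lra) y) Hc Hd (t - c) ltac:(lra))
            as [w' [Hw' [_ Hn]]]. apply Hn, Hph. lra.
        - subst c. apply Hph. lra. }
      assert (Cons : consistent _ (updates _ dclose dopen dmin Controller t (rho t))).
      { apply cons_ctrl; auto. intros y Hy E.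
        destruct (proj1 (IH t ltac:(lra) y) t Hy) as [_ B].
        rewrite (B t) in E; [discriminate|]. rewrite HW; lra. }
      exists eps. split; auto. intros w Hw x.
      unfold I1, I2. rewrite (Hs w Hw). split.
      + intros d Hd. destruct (RSD t s x Ht Hr) as [E|[[E1 [E2 E3]]|[E1 E2]]].
        * rewrite E in Hd. destruct (proj1 (IH t ltac:(lra) x) d Hd) as [A B].
          split; auto; lra.
        * rewrite E3 in Hd. injection Hd; intro; subst d. rewrite HW in *. split; [lra|].
          intros w' Hw'. apply Key; auto. lra.
        * congruence.
      + intros Hc Hd. exfalso. rewrite TS in Hc.
        destruct (RSD t s x Ht Hr) as [E|[[E1 [E2 E3]]|[E1 E2]]].
        * rewrite E in Hd.
          assert (Hen : enabled_at _ dclose dopen dmin Controller t (rho t)).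
          { split; auto. exists (LDeadline _ x), (VDeadline (Some (t + W dclose dmin))).
            split. simpl. left. exists x. left. unfold SetDeadline; auto.
            simpl. rewrite Hd. discriminate. }
          destruct (Himm t Ht Hen) as [HF [s'' [Hr'' Hne]]].
          pose proof (right_unique _ rho t s s'' Hr Hr''). subst s''.
          destruct (Hrun1 t s Ht Hr Hne) as [Hex _].
          assert (Hu' : content _ s (LDeadline _ x) = VDeadline (Some (t + W dclose dmin))).
          { eapply exec_in; eauto. simpl. left. exists x. left. unfold SetDeadline; auto. }
          simpl in Hu'. rewrite E, Hd in Hu'. discriminate Hu'.
        * congruence.
        * congruence. }
  destruct Hset as [[Hpos [s [Hl [Hd1 Hd2]]]]|[Hd1 [s [Hr Hd2]]]].
  { exfalso. destruct (LS alpha s Hpos Hl) as [_ E]. congruence. }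
  destruct (RSDir alpha s Ha Hr) as [E|[[y [Hy _]]|[E _]]]; try congruence.
  destruct (proj1 (Inv alpha Ha y) alpha Hy) as [_ Good].
  assert (HQ : forall t, 0 <= t -> alpha < t < alpha + dclose ->
             Dir _ (rho t) = DClose /\ Deadline _ (rho t) y = Some alpha).
  { apply (real_ind (fun t => alpha < t < alpha + dclose ->
             Dir _ (rho t) = DClose /\ Deadline _ (rho t) y = Some alpha)).
    - intros [h _]; lra.
    - intros t Ht IH Hin.
      destruct (left_exists _ rho Hpre t Ht) as [s' Hl].
      destruct (LS t s' Ht Hl) as [LD LDir]. destruct Hl as [eps [Heps Hs']].
      set (w := Rmax (t - eps/2) ((alpha + t)/2)).
      assert (t - eps/2 <= w) by apply Rmax_l. assert ((alpha+t)/2 <= w) by apply Rmax_r.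
      assert (w < t) by (apply Rmax_lub_lt; lra).
      destruct (IH w ltac:(lra) ltac:(lra)) as [A B].
      rewrite (Hs' w) in A, B by lra. rewrite <- LDir, <- LD. auto.
    - intros t Ht IH. destruct (Rlt_le_dec t alpha) as [h|h].
      { exists (alpha - t). split; [lra|]. intros w Hw [h' _]; lra. }
      destruct (Rle_lt_or_eq_dec alpha t h) as [h1|h1].
      + destruct (Rlt_le_dec t (alpha + dclose)) as [h2|h2].
        * destruct (IH t ltac:(lra) ltac:(lra)) as [Dt Yt].
          destruct (right_exists _ rho Hpre t Ht) as [s0 Hr0].
          pose proof Hr0 as Hr0'. destruct Hr0' as [eps [Heps Hs0]].
          assert (Ct : TrackStatus _ (rho t) y = Coming) by (apply Good; rewrite HW; lra).
          exists eps. split; auto. intros w Hw Hin. rewrite (Hs0 w Hw). split.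
          -- destruct (RSDir t s0 Ht Hr0) as [E|[[z [_ E]]|[_ [Hsf _]]]].
             ++ congruence.
             ++ auto.
             ++ exfalso. destruct (Hsf y) as [E|E]; [congruence|]. rewrite Yt in E. lra.
          -- destruct (RSD t s0 y Ht Hr0) as [E|[[E1 [E2 E3]]|[E1 E2]]]; congruence.
        * exists 1. split; [lra|]. intros w Hw [_ h']; lra.
      + subst t. pose proof Hr as Hr'. destruct Hr' as [eps [Heps Hs0]].
        assert (Ca : TrackStatus _ (rho alpha) y = Coming) by (apply Good; rewrite HW; lra).
        exists eps. split; auto. intros w Hw Hin. rewrite (Hs0 w Hw). split; auto.
        destruct (RSD alpha s y Ha Hr) as [E|[[E1 [E2 E3]]|[E1 E2]]]; congruence. }
  apply (HQ u); lra.
Qed.
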